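(* Let $G$ be an edge-coloured multigraph, $t \ge 5$, $M$ a rainbow matching of maximum size in $G$, $C_0$ the set of colours not used on $M$, and $N$ a $t$-auxiliary matching for $M$. Then (i) there is no $(C_0 \cup C_N)$-coloured edge vertex-disjoint from the matching $N \cup (M\setminus M_N)$, and (ii) there is no $(C_0\cup C_N)$-rainbow horn in the matching $N \cup (M \setminus M_N)$.
   Context: A rainbow matching is a matching whose edges have pairwise distinct colours; an edge is $C$-coloured if its colour lies in $C$. Let $V$ be the vertex set of $G$. For a rainbow matching $M$ with unused colour set $C_0$, a $t$-auxiliary matching for $M$ is a matching $N$ each of whose edges has one endpoint in $V\setminus V(M)$ and the other in $V(M)$, such that for each edge of $N$ its pair of endpoints is joined by edges of at least $t$ distinct colours from $C_0$, and no two edges of $N$ intersect the same edge of $M$. $M_N \subseteq M$ is the set of edges of $M$ intersecting an edge of $N$, and $C_N$ is the set of colours of the edges of $M_N$. For a matching $L$, a $C$-rainbow horn in $L$ is an edge $e\in L$ such that there exist two vertex-disjoint edges $e_1,e_2$, each with one endpoint in $e$ and the other in $V\setminus V(L)$, of two distinct colours $c_1,c_2\in C$. *)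

(* Defs.v *)
From mathcomp Require Import all_boot.
Set Implicit Arguments. Unset Strict Implicit. Unset Printing Implicit Defensive.

Section RainbowDefs.
Variables (V C E : finType) (src dst : E -> V) (col : E -> C).

Definition vset (e : E) : {set V} := [set src e; dst e].

Definition loopless : Prop := forall e, src e != dst e.

Definition is_matching (M : {set E}) : Prop :=
  forall e f, e \in M -> f \in M -> e != f -> [disjoint vset e & vset f].

Definition rainbow (M : {set E}) : Prop := {in M &, injective col}.

Definition rainbow_matching (M : {set E}) : Prop := is_matching M /\ rainbow M.

Definition max_rainbow_matching (M : {set E}) : Prop :=
  rainbow_matching M /\ forall M', rainbow_matching M' -> #|M'| <= #|M|.

Definition vsetM (M : {set E}) : {set V} := \bigcup_(e in M) vset e.

Definition unused (M : {set E}) : {set C} := ~: (col @: M).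

Definition joining_cols (C0 : {set C}) (e : E) : {set C} :=
  [set c in C0 | [exists e' : E, (vset e' == vset e) && (col e' == c)]].

Definition t_auxiliary (t : nat) (M N : {set E}) : Prop :=
  [/\ is_matching N,
      forall e, e \in N ->
        ((src e \notin vsetM M) && (dst e \in vsetM M)) ||
        ((dst e \notin vsetM M) && (src e \in vsetM M)),
      forall e, e \in N -> t <= #|joining_cols (unused M) e|
    & forall f, f \in M -> #|[set e in N | ~~ [disjoint vset e & vset f]]| <= 1].

Definition MN (M N : {set E}) : {set E} :=
  [set f in M | [exists e in N, ~~ [disjoint vset e & vset f]]].

Definition CN (M N : {set E}) : {set C} := col @: MN M N.

Definition horn_edge (L : {set E}) (e e' : E) : Prop :=
  exists x y, vset e' = [set x; y] /\ x \in vset e /\ y \notin vsetM L.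

Definition rainbow_horn (Cs : {set C}) (L : {set E}) (e : E) : Prop :=
  e \in L /\ exists e1 e2 : E,
    [/\ [disjoint vset e1 & vset e2], horn_edge L e e1, horn_edge L e e2,
        col e1 != col e2 & (col e1 \in Cs) && (col e2 \in Cs)].

End RainbowDefs.

(* Main.v *)
Require Import Defs.
From mathcomp Require Import all_boot.
From mathcomp Require Import zify.
Set Implicit Arguments. Unset Strict Implicit. Unset Printing Implicit Defensive.

Lemma meetsP (T : finType) (A B : {set T}) :
  reflect (exists2 x, x \in A & x \in B) (~~ [disjoint A & B]).
Proof.
rewrite disjoint_subset; apply: (iffP subsetPn) => [[x xA] | [x xA xB]].
  by rewrite !inE negbK => xB; exists x.
by exists x => //; rewrite !inE negbK.
Qed.

Lemma card_le1 (T : finType) (A : {set T}) :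
  (forall a b, a \in A -> b \in A -> a = b) -> #|A| <= 1.
Proof. by move=> H; apply/card_le1_eqP => a b ha hb; apply: H. Qed.

Section Proof.
Variables (V C E : finType) (src dst : E -> V) (col : E -> C).
Local Notation vs := (vset src dst).
Local Notation vM := (vsetM src dst).

Lemma vs_src e : src e \in vs e. Proof. by rewrite /vset !inE eqxx. Qed.
Lemma in_vs x e : (x \in vs e) = (x == src e) || (x == dst e).
Proof. by rewrite /vset !inE. Qed.

Lemma disj_neq a b : [disjoint vs a & vs b] -> a != b.
Proof.
apply: contraTneq => ->; apply/meetsP; exists (src b); exact: vs_src.
Qed.

Lemma vM_sub (L : {set E}) g : g \in L -> vs g \subset vM L.
Proof. by move=> gL; apply: (bigcup_sup g gL). Qed.

Lemma matchingU (X Y : {set E}) : is_matching src dst X -> is_matching src dst Y ->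
  (forall x y, x \in X -> y \in Y -> [disjoint vs x & vs y]) ->
  is_matching src dst (X :|: Y).
Proof.
move=> mX mY XY e f; rewrite !inE => /orP[eX|eY] /orP[fX|fY] ef.
- exact: mX.
- exact: XY.
- rewrite disjoint_sym; exact: XY.
- exact: mY.
Qed.

Lemma rainbowU (X Y : {set E}) : rainbow col X -> rainbow col Y ->
  (forall x y, x \in X -> y \in Y -> col x != col y) -> rainbow col (X :|: Y).
Proof.
move=> rX rY XY e f; rewrite !inE => /orP[eX|eY] /orP[fX|fY] cef.
- exact: rX.
- by move: (XY _ _ eX fY); rewrite cef eqxx.
- by move: (XY _ _ fX eY); rewrite cef eqxx.
- exact: rY.
Qed.

Lemma matching1 a : is_matching src dst [set a].
Proof. by move=> e f; rewrite !inE => /eqP -> /eqP ->; rewrite eqxx. Qed.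
Lemma rainbow1 a : rainbow col [set a].
Proof. by move=> e f; rewrite !inE => /eqP -> /eqP ->. Qed.

Lemma matchingS (X Y : {set E}) : is_matching src dst X -> Y \subset X -> is_matching src dst Y.
Proof. by move=> mX /subsetP YX e f /YX eX /YX fX; apply: mX. Qed.
Lemma rainbowS (X Y : {set E}) : rainbow col X -> Y \subset X -> rainbow col Y.
Proof. by move=> rX /subsetP YX e f /YX eX /YX fX; apply: rX. Qed.

Lemma unused_notM (M : {set E}) f : f \in M -> col f \notin unused col M.
Proof. by move=> fM; rewrite /unused inE negbK; apply: imset_f. Qed.

Lemma matching_same (M : {set E}) f f' z : is_matching src dst M -> f \in M -> f' \in M ->
  z \in vs f -> z \in vs f' -> f = f'.
Proof.
move=> mM fM f'M zf zf'; apply/eqP; apply: contraTT isT => ff'.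
by move: (mM _ _ fM f'M ff') => /disjointFr /(_ zf); rewrite zf'.
Qed.

Variables (t : nat) (M N : {set E}).
Hypotheses (ht : 5 <= t)
  (hmax : max_rainbow_matching src dst col M)
  (haux : t_auxiliary src dst col t M N).

Local Notation L := (N :|: (M :\: MN src dst M N)).
Definition meets a b := ~~ [disjoint vs a & vs b].

Lemma mM : is_matching src dst M. Proof. by case: hmax => [[]]. Qed.
Lemma rM : rainbow col M. Proof. by case: hmax => [[]]. Qed.
Lemma mN : is_matching src dst N. Proof. by case: haux. Qed.

Lemma meets_sym a b : meets a b = meets b a.
Proof. by rewrite /meets disjoint_sym. Qed.

Lemma N_unique e f f' : e \in N -> f \in M -> f' \in M -> meets e f -> meets e f' -> f = f'.
Proof.
move=> eN fM f'M /meetsP[z ze zf] /meetsP[z' ze' zf'].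
case: haux => _ h2 _ _.
have zM : z \in vM M by apply/bigcupP; exists f.
have z'M : z' \in vM M by apply/bigcupP; exists f'.
have zz : z = z'.
  move: ze ze' zM z'M (h2 e eN); rewrite !in_vs => /orP[]/eqP-> /orP[]/eqP-> zM' z'M' //;
  by rewrite zM' z'M' /=; intro HH; discriminate HH.
rewrite -zz in zf'; exact: (matching_same mM fM f'M zf zf').
Qed.

Lemma MN_M f : f \in MN src dst M N -> f \in M.
Proof. by rewrite inE => /andP[]. Qed.


Lemma build_R (s : seq E) (K : {set C}) :
  uniq s -> {subset s <= MN src dst M N} -> #|K| + size s < t ->
  exists R : {set E}, [/\ #|R| = size s, is_matching src dst R, rainbow col R,
    forall r, r \in R -> (col r \in unused col M) && (col r \notin K)
    & forall r, r \in R -> exists e, exists2 f, f \in s & [/\ e \in N, vs r = vs e & meets e f]].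
Proof.
elim: s K => [|f s IH] K /=.
  move=> _ _ _; exists set0; split; rewrite ?cards0 //.
  - by move=> e f; rewrite inE.
  - by move=> e f; rewrite inE.
  - by move=> r; rewrite inE.
  - by move=> r; rewrite inE.
move=> /andP[fs us] sub hK.
have /MN_M fM : f \in MN src dst M N by apply: sub; rewrite inE eqxx.
have [e eN mef] : exists2 e, e \in N & meets e f.
  move: (sub f (mem_head _ _)); rewrite inE => /andP[_ /existsP[e /andP[eN h]]].
  by exists e.
have [c cJ cK] : exists2 c, c \in joining_cols src dst col (unused col M) e & c \notin K.
  apply/subsetPn; apply/negP => sJK.
  case: haux => _ _ h3 _.
  move: (subset_leq_card sJK) (h3 e eN) hK; lia.
move: cJ; rewrite inE => /andP[cU /existsP[e' /andP[/eqP ve' /eqP ce']]].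
have sub' : {subset s <= MN src dst M N}.
  by move=> x xs; apply: sub; rewrite inE xs orbT.
have hK' : #|c |: K| + size s < t by rewrite cardsU1 cK; lia.
have [R' [cR mR rR colR strR]] := IH (c |: K) us sub' hK'.
have e'R : e' \notin R'.
  apply/negP => /colR; by rewrite ce' !inE eqxx /= andbF.
exists (e' |: R'); split.
- by rewrite cardsU1 e'R cR add1n.
- apply: matchingU; [exact: matching1 | exact: mR | ].
  move=> x y; rewrite inE => /eqP -> yR; rewrite ve'.
  have [e2 [f2 f2s [e2N vy me2]]] := strR y yR.
  rewrite vy; case: (eqVneq e e2) => [ee2|ne]; last exact: mN eN e2N ne.
  subst e2.
  have f2M : f2 \in M by apply: MN_M; apply: sub'.
  by move: fs; rewrite (N_unique eN fM f2M mef me2) f2s.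
- apply: rainbowU; [exact: rainbow1 | exact: rR | ].
  move=> x y; rewrite inE => /eqP -> /colR /andP[_]; rewrite ce' !inE negb_or.
  by rewrite eq_sym => /andP[].
- move=> r; rewrite in_setU1 => /orP[/eqP-> | /colR /andP[-> ]].
    by rewrite ce' cU cK.
  by rewrite !inE negb_or => /andP[].
- move=> r; rewrite in_setU1 => /orP[/eqP-> | /strR [e2 [f2 f2s H]]].
    by exists e, f; rewrite ?inE ?eqxx.
  by exists e2, f2; rewrite // inE f2s orbT.
Qed.

Lemma card_dU (P Q : {set E}) : (forall p q, p \in P -> q \in Q -> p != q) ->
  #|P :|: Q| = #|P| + #|Q|.
Proof.
move=> H; apply/eqP; rewrite (leq_card_setU P Q).2.
rewrite disjoint_subset; apply/subsetP => p pP; rewrite inE; apply/negP => pQ.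
by move: (H _ _ pP pQ); rewrite eqxx.
Qed.

Lemma no_aug (X R A : {set E}) : X \subset M -> #|X| < #|R| + #|A| ->
  is_matching src dst R -> rainbow col R -> is_matching src dst A -> rainbow col A ->
  (forall r, r \in R -> col r \in unused col M) ->
  (forall f r, f \in M -> f \notin X -> r \in R -> [disjoint vs f & vs r]) ->
  (forall f a, f \in M -> f \notin X -> a \in A -> [disjoint vs f & vs a] && (col f != col a)) ->
  (forall r a, r \in R -> a \in A -> [disjoint vs r & vs a] && (col r != col a)) -> False.
Proof.
move=> XM hc mR rR mA rA cR MR MA RA.
have sub: M :\: X \subset M by apply: subsetDl.
have hM' : rainbow_matching src dst col ((M :\: X) :|: R :|: A).
  split.
  - apply: matchingU; first apply: matchingU.
    + exact: matchingS mM sub.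
    + exact: mR.
    + by move=> f r; rewrite inE => /andP[fX fM] rR'; apply: MR.
    + exact: mA.
    + move=> x a; rewrite !inE => /orP[/andP[xX xM] | xR] aA.
        by case/andP: (MA _ _ xM xX aA).
      by case/andP: (RA _ _ xR aA).
  - apply: rainbowU; first apply: rainbowU.
    + exact: rainbowS rM sub.
    + exact: rR.
    + move=> f r; rewrite inE => /andP[fX fM] rR'.
      by apply: contraNneq (unused_notM fM) => ->; exact: cR.
    + exact: rA.
    + move=> x a; rewrite !inE => /orP[/andP[xX xM] | xR] aA.
        by case/andP: (MA _ _ xM xX aA).
      by case/andP: (RA _ _ xR aA).
case: hmax => _ /(_ _ hM').
rewrite card_dU; last first.
  move=> x a; rewrite !inE => /orP[/andP[xX xM] | xR] aA; apply: disj_neq.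
    by case/andP: (MA _ _ xM xX aA).
  by case/andP: (RA _ _ xR aA).
rewrite card_dU; last first.
  by move=> f r; rewrite inE => /andP[fX fM] rR'; apply: disj_neq; apply: MR.
rewrite cardsD (setIidPr XM).
move: (subset_leq_card XM) hc; lia.
Qed.


Lemma rest_R (s : seq E) f r e f2 : {subset s <= MN src dst M N} ->
  f \in M -> f \notin s -> f2 \in s -> e \in N -> vs r = vs e -> meets e f2 ->
  [disjoint vs f & vs r].
Proof.
move=> sub fM fs f2s eN -> me2.
case: (boolP [disjoint vs f & vs e]) => // H.
have mef : meets e f by rewrite meets_sym.
have f2M : f2 \in M by apply: MN_M; apply: sub.
by move: fs; rewrite (N_unique eN fM f2M mef me2) f2s.
Qed.

Lemma dgL g h : [disjoint vs g & vM L] -> h \in L -> [disjoint vs g & vs h].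
Proof. by move=> dg hL; exact: disjointWr (vM_sub hL) dg. Qed.

Lemma T_le1 z : #|[set f in M | z \in vs f]| <= 1.
Proof.
apply: card_le1 => a b /setIdP[aM sa] /setIdP[bM sb].
exact: (matching_same mM aM bM sa sb).
Qed.

Lemma Tc_le1 c : #|[set f in M | col f == c]| <= 1.
Proof.
apply: card_le1 => a b; rewrite !inE => /andP[aM /eqP ca] /andP[bM /eqP cb].
by apply: rM => //; rewrite ca cb.
Qed.

Lemma KTc_le1 c : #|[set c' in unused col M | c' == c]| +
  #|[set f in M | col f == c]| <= 1.
Proof.
case: (boolP (c \in unused col M)) => hc.
  have -> : [set f in M | col f == c] = set0.
    apply/eqP; rewrite -subset0; apply/subsetP => f /setIdP[fM /eqP cf].
    by move: (unused_notM fM); rewrite cf hc.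
  rewrite cards0 addn0; apply: card_le1 => a b.
  by move=> /setIdP[_ /eqP ->] /setIdP[_ /eqP ->].
have -> : [set c' in unused col M | c' == c] = set0.
  apply/eqP; rewrite -subset0; apply/subsetP => c' /setIdP[cu /eqP cc].
  by move: hc; rewrite -cc cu.
by rewrite cards0 add0n; apply: Tc_le1.
Qed.

Lemma in_L f : f \in M -> f \notin MN src dst M N -> f \in L.
Proof. by move=> fM fMN; rewrite in_setU in_setD fMN fM orbT. Qed.

Local Notation Cs := (unused col M :|: CN src dst col M N).

Lemma col_Cs f c : c \in Cs -> f \in M -> col f = c -> f \in MN src dst M N.
Proof.
rewrite in_setU => /orP[cU fM cf|/imsetP[f0 f0MN -> fM cf]].
  by move: (unused_notM fM); rewrite cf cU.
by rewrite (rM fM (MN_M f0MN) cf).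
Qed.

Lemma part1 g : col g \in Cs -> [disjoint vs g & vM L] -> False.
Proof.
move=> cg dg.
pose S := [set f in MN src dst M N | meets f g || (col f == col g)].
have Sb : #|S| <= 3.
  have sub : S \subset [set f in M | src g \in vs f] :|: [set f in M | dst g \in vs f]
     :|: [set f in M | col f == col g].
    apply/subsetP => f; rewrite in_set => /andP[/MN_M fM /orP[/meetsP[z zf]|cf]].
      rewrite in_vs => /orP[]/eqP zg; subst z; rewrite !in_setU.
        by apply/orP; left; apply/orP; left; apply/setIdP.
      by apply/orP; left; apply/orP; right; apply/setIdP.
    by rewrite !inE fM cf ?orbT.
  move: (subset_leq_card sub).
  move: (leq_card_setU [set f in M | src g \in vs f] [set f in M | dst g \in vs f]).1.
  move: (leq_card_setU ([set f in M | src g \in vs f] :|: [set f in M | dst g \in vs f])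
    [set f in M | col f == col g]).1.
  move: (T_le1 (src g)) (T_le1 (dst g)) (Tc_le1 (col g)); lia.
have sub : {subset enum S <= MN src dst M N}.
  by move=> f; rewrite mem_enum in_set => /andP[].
have hK : #|[set col g]| + size (enum S) < t by rewrite cards1 -cardE; lia.
have [R [cR mR rR colR strR]] := build_R (enum_uniq _) sub hK.
apply: (@no_aug S R [set g]).
- by apply/subsetP => f; rewrite in_set => /andP[/MN_M].
- by rewrite cR -cardE cards1 addn1.
- exact: mR.
- exact: rR.
- exact: matching1.
- exact: rainbow1.
- by move=> r /colR /andP[].
- move=> f r fM fS rR'; have [e [f2 f2s [eN vr me2]]] := strR r rR'.
  by apply: (rest_R sub fM _ f2s eN vr me2); rewrite mem_enum.
- move=> f a fM fS; rewrite inE => /eqP ->; apply/andP; split.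
  + case: (boolP (f \in MN src dst M N)) => fMN.
      apply: contraR fS => mfg.
      by rewrite in_set fMN /meets mfg.
    by rewrite disjoint_sym; apply: dgL dg (in_L fM fMN).
  + apply/negP => /eqP cf; move: fS; rewrite in_set (col_Cs cg fM cf) cf eqxx orbT.
    by [].
- move=> r a rR'; rewrite inE => /eqP ->; apply/andP; split.
  + have [e [f2 f2s [eN vr me2]]] := strR r rR'.
    by rewrite vr disjoint_sym; apply: dgL dg _; rewrite in_setU eN.
  + by move: (colR r rR') => /andP[_]; rewrite inE.
Qed.


Lemma meets_M f e : f \in M -> e \in M -> meets f e -> f = e.
Proof.
move=> fM eM mfe; case: (eqVneq f e) => // ne.
by move: mfe; rewrite /meets (mM fM eM ne).
Qed.

Lemma horn_meet a x y f : vs a = [set x; y] -> meets f a ->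
  (x \in vs f) || (y \in vs f).
Proof.
move=> va /meetsP[z zf]; rewrite va in_set2 => /orP[]/eqP zz; subst z;
by rewrite zf ?orbT.
Qed.

Local Notation T z := [set f in M | z \in vs f].
Local Notation Tc c := [set f in M | col f == c].
Local Notation Kc c := [set c' in unused col M | c' == c].

Lemma part2 e e1 e2 : e \in L -> [disjoint vs e1 & vs e2] ->
  horn_edge src dst L e e1 -> horn_edge src dst L e e2 -> col e1 != col e2 ->
  col e1 \in Cs -> col e2 \in Cs -> False.
Proof.
move=> eL d12 [x1 [y1 [v1 [x1e y1L]]]] [x2 [y2 [v2 [x2e y2L]]]] c12 c1 c2.
pose D0 := [set f in M | meets f e].
pose S := [set f in MN src dst M N | (meets f e1 || meets f e2 || (col f == col e1)
   || (col f == col e2)) && (f \notin D0)].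
pose K := Kc (col e1) :|: Kc (col e2).
have D0b : #|D0| <= 1.
  apply: card_le1 => a b /setIdP[aM mae] /setIdP[bM mbe].
  move: eL; rewrite in_setU in_setD => /orP[eN | /andP[_ eM]].
    by apply: (N_unique eN aM bM); rewrite meets_sym.
  by rewrite (meets_M aM eM mae) (meets_M bM eM mbe).
have key y x a f : vs a = [set x; y] -> x \in vs e -> f \in M -> f \notin D0 ->
    meets f a -> f \in T y.
  move=> va xe fM fD /(horn_meet va) /orP[xf|yf]; last by apply/setIdP.
  by case/negP: fD; apply/setIdP; split => //; apply/meetsP; exists x.
have Sb : #|K| + #|S| <= 4.
  have sub : S \subset T y1 :|: T y2 :|: Tc (col e1) :|: Tc (col e2).
    apply/subsetP => f /setIdP[fMN /andP[h fD]]; have fM := MN_M fMN.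
    rewrite !in_setU; move: h => /orP[/orP[/orP[m1|m2]|cf1]|cf2].
    - by rewrite (key _ _ _ _ v1 x1e fM fD m1).
    - by rewrite (key _ _ _ _ v2 x2e fM fD m2) ?orbT.
    - have -> : f \in Tc (col e1) by apply/setIdP; split.
      by rewrite ?orbT.
    - have -> : f \in Tc (col e2) by apply/setIdP; split.
      by rewrite ?orbT.
  move: (subset_leq_card sub).
  move: (leq_card_setU (T y1) (T y2)).1.
  move: (leq_card_setU (T y1 :|: T y2) (Tc (col e1))).1.
  move: (leq_card_setU (T y1 :|: T y2 :|: Tc (col e1)) (Tc (col e2))).1.
  move: (leq_card_setU (Kc (col e1)) (Kc (col e2))).1.
  move: (T_le1 y1) (T_le1 y2) (KTc_le1 (col e1)) (KTc_le1 (col e2)); rewrite /K.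
  lia.
have hA a : a \in [set e1; e2] -> exists x y, vs a = [set x; y] /\ [/\ x \in vs e,
    y \notin vM L, col a \in Cs, (col a \in unused col M -> col a \in K)
    & forall f, f \in MN src dst M N -> f \notin D0 -> meets f a || (col f == col a) ->
        f \in S].
  rewrite in_set2 => /orP[]/eqP->.
  - exists x1, y1; split => //; split => //.
    + by move=> cu; rewrite in_setU; apply/orP; left; apply/setIdP.
    + move=> f fMN fD /orP[m|cf]; apply/setIdP; split => //;
      by rewrite fD andbT ?m ?cf ?orbT.
  - exists x2, y2; split => //; split => //.
    + by move=> cu; rewrite in_setU; apply/orP; right; apply/setIdP.
    + move=> f fMN fD /orP[m|cf]; apply/setIdP; split => //;
      by rewrite fD andbT ?m ?cf ?orbT.
have sub : {subset enum S <= MN src dst M N}.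
  by move=> f; rewrite mem_enum => /setIdP[].
have hK : #|K| + size (enum S) < t by rewrite -cardE; lia.
have [R [cR mR rR colR strR]] := build_R (enum_uniq _) sub hK.
apply: (@no_aug (D0 :|: S) R [set e1; e2]).
- apply/subsetP => f; rewrite in_setU => /orP[/setIdP[]//| /setIdP[/MN_M]] //.
- rewrite cR -cardE cards2 (disj_neq d12).
  move: (leq_card_setU D0 S).1 D0b; lia.
- exact: mR.
- exact: rR.
- apply: matchingU; [exact: matching1 | exact: matching1 |].
  by move=> a b; rewrite !inE => /eqP-> /eqP->.
- apply: rainbowU; [exact: rainbow1 | exact: rainbow1 |].
  by move=> a b; rewrite !inE => /eqP-> /eqP->.
- by move=> r /colR /andP[].
- move=> f r fM fX rR'; have [e' [f2 f2s [eN vr me2]]] := strR r rR'.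
  move: fX; rewrite in_setU negb_or => /andP[_ fS].
  by apply: (rest_R sub fM _ f2s eN vr me2); rewrite mem_enum.
- move=> f a fM fX aA; have [x [y [va [xe yL ca cK hS]]]] := hA a aA.
  move: fX; rewrite in_setU negb_or => /andP[fD fS].
  apply/andP; split.
  + case: (boolP [disjoint vs f & vs a]) => //= mfa.
    case: (boolP (f \in MN src dst M N)) => fMN.
      have : f \in S by apply: hS => //; rewrite /meets mfa.
      by rewrite (negbTE fS).
    have fL := in_L fM fMN.
    have := horn_meet va mfa => /orP[xf|yf].
      by case/negP: fD; apply/setIdP; split => //; apply/meetsP; exists x.
    by case/negP: yL; apply: (subsetP (vM_sub fL)).
  + apply/negP => /eqP cf.
    have fMN := col_Cs ca fM cf.
    have : f \in S by apply: hS => //; rewrite cf eqxx orbT.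
    by rewrite (negbTE fS).
- move=> r a rR' aA; have [x [y [va [xe yL ca cK hS]]]] := hA a aA.
  have [er [fr frs [erN vr me]]] := strR r rR'.
  move: frs; rewrite mem_enum => /setIdP[frMN /andP[_ frD]].
  apply/andP; split.
  + rewrite vr; case: (boolP [disjoint vs er & vs a]) => //= m.
    have erL : er \in L by rewrite in_setU erN.
    have := horn_meet va m => /orP[xer|yer]; last first.
      by case/negP: yL; apply: (subsetP (vM_sub erL)).
    have mee : meets er e by apply/meetsP; exists x.
    move: eL; rewrite in_setU in_setD => /orP[eN | /andP[eMN eM]].
      case: (eqVneq er e) => [ee|ne]; last by move: mee; rewrite /meets (mN erN eN ne).
      subst er; case/negP: frD; apply/setIdP; split; first exact: MN_M frMN.
      by rewrite meets_sym.
    case/negP: eMN; apply/setIdP; split => //; apply/existsP; exists er.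
    by rewrite erN.
  + move: (colR r rR') => /andP[cu cnK]; apply/negP => /eqP cra.
    case: (boolP (col a \in unused col M)) => au.
      by move: cnK; rewrite cra (cK au).
    by move: au; rewrite -cra cu.
Qed.

End Proof.


Theorem lemma2p6 (V C E : finType) (src dst : E -> V) (col : E -> C)
  (t : nat) (M N : {set E}) :
  loopless src dst ->
  5 <= t ->
  max_rainbow_matching src dst col M ->
  t_auxiliary src dst col t M N ->
  let Cs := unused col M :|: CN src dst col M N in
  let L := N :|: (M :\: MN src dst M N) in
  (~ exists e : E, col e \in Cs /\ [disjoint vset src dst e & vsetM src dst L]) /\
  (~ exists e : E, rainbow_horn src dst col Cs L e).
Proof.
move=> _ ht hmax haux Cs L; rewrite {}/Cs {}/L; split.
  case=> g [cg dg]; exact: (part1 ht hmax haux cg dg).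
case=> e [eL [e1 [e2 [d12 h1 h2 c12 /andP[c1 c2]]]]].
exact: (part2 ht hmax haux eL d12 h1 h2 c12 c1 c2).
Qed.
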